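(* Let $V=\{1,\dots,n\}$, let $(\bar\Omega,\mathcal F,\mathbb P)$ be a probability space, and let $\sigma:\{0,1\}^n\times\bar\Omega\to\mathbb R$ be such that for every $\omega$ the function $x\mapsto\sigma(x,\omega)$ on $\{0,1\}^n$ (viewed as a set function on $V$) is nondecreasing and submodular, and each $\sigma(x)$ is integrable. Let $\mathcal X\subseteq\{0,1\}^n$ be nonempty and $\alpha\in(0,1]$. Consider the following delayed constraint generation algorithm for $\max_{x\in\mathcal X}\mathrm{CVaR}_\alpha(\sigma(x))$, with tolerance $\epsilon=0$: start with a finite set $\mathcal C$ of optimality cuts, $\mathrm{UB}=\infty$, $\mathrm{LB}=-\infty$; while $\mathrm{UB}-\mathrm{LB}>\epsilon$: solve the relaxed master problem $\max\{\psi:(x,\psi)\text{ satisfies all cuts in }\mathcal C,\ x\in\mathcal X,\ \psi\in\mathbb R\}$ to optimality, obtaining $(\bar\psi,\bar x)$; set $\mathrm{UB}=\bar\psi$ and $\mathrm{LB}=\mathrm{CVaR}_\alpha(\sigma(\bar x))$; add to $\mathcal C$ the cut (A) and/or the cut (B) generated at $\bar x$, where, with $\bar X$ the support of $\bar x$, (A): $\psi\le\mathrm{CVaR}_\alpha(\sigma(\bar x))+\sum_{j\in V\setminus\bar X}(\mathrm{CVaR}_1(\sigma(\bar x+\mathbf e_j))-\mathrm{CVaR}_\alpha(\sigma(\bar x)))x_j$; (B): $\psi\le\mathrm{CVaR}_\alpha(\sigma(\bar x))+\sum_{i=1}^r\bar\delta_{j_i}(\bar x)x_{j_i}$, for some ordering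 $j_1,\dots,j_r$ of $V\setminus\bar X$, $\bar\delta_{j_i}(\bar x)=\mathrm{CVaR}_\alpha(\sigma(\mathbf 1-\sum_{l=i+1}^r\mathbf e_{j_l}))-\mathrm{CVaR}_\alpha(\sigma(\bar x))$; upon termination output $\bar x$. Then this algorithm terminates after finitely many iterations and outputs an optimal solution of $\max_{x\in\mathcal X}\mathrm{CVaR}_\alpha(\sigma(x))$.
   Context: $\mathrm{CVaR}_\alpha(Y)=\max_{\eta\in\mathbb R}\{\eta-\frac1\alpha\mathbb E([\eta-Y]_+)\}$ for integrable $Y$ and $\alpha\in(0,1]$, with $[z]_+=\max(z,0)$. $\mathbf e_j$ is the $j$-th unit vector and $\mathbf 1$ the all-ones vector in $\mathbb R^n$. It is assumed that $\mathrm{CVaR}_\alpha(\sigma(x))$ can be evaluated exactly for any given $x$ (a CVaR oracle), and that each relaxed master problem is solved to optimality. *)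

(* Defs.v *)
From HB Require Import structures.
From mathcomp Require Import all_boot all_order all_algebra.
From mathcomp Require Import all_classical all_reals all_analysis.
Set Implicit Arguments. Unset Strict Implicit. Unset Printing Implicit Defensive.
Import Order.TTheory GRing.Theory Num.Theory.
Local Open Scope classical_set_scope.
Local Open Scope ring_scope.

(* A point x of {0,1}^n is represented by its support, a subset of V = 'I_n;
   the coordinate x_j is (j \in x)%:R. *)

(* CVaR_a(Y) = max_eta { eta - a^-1 E[(eta - Y)_+] } (the max is attained for
   integrable Y, so it equals the sup). *)
Definition CVaR d (T : measurableType d) (R : realType) (P : probability T R)
  (a : R) (Y : T -> R) : R :=
  sup [set eta - a^-1 * fine (\int[P]_w (Num.max (eta - Y w) 0)%:E) | eta in [set: R]].

(* A cut  psi <= rhs(x)  is represented by its right-hand side function. *)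
Definition dcg_cut n (R : realType) := {set 'I_n} -> R.

Definition affine_cut n (R : realType) (c : dcg_cut n R) : Prop :=
  exists (c0 : R) (b : 'I_n -> R), forall x, c x = c0 + \sum_(j < n) b j * (j \in x)%:R.

Section Cuts.
Context d (T : measurableType d) (R : realType) (P : probability T R) (n : nat)
  (sigma : {set 'I_n} -> T -> R) (a : R).

Definition cutA (xb : {set 'I_n}) : dcg_cut n R := fun x =>
  CVaR P a (sigma xb) +
  \sum_(j in ~: xb) (CVaR P 1 (sigma (j |: xb)) - CVaR P a (sigma xb)) * (j \in x)%:R.

(* cut (B) generated at xb for the ordering s = [:: j_1; ...; j_r] of V \ xb;
   for j = j_i, [set y in drop (index j s).+1 s] = {j_{i+1},...,j_r}. *)
Definition cutB (xb : {set 'I_n}) (s : seq 'I_n) : dcg_cut n R := fun x =>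
  CVaR P a (sigma xb) +
  \sum_(j <- s) (CVaR P a (sigma (~: [set y in drop (index j s).+1 s]))
                 - CVaR P a (sigma xb)) * (j \in x)%:R.

Definition is_ordering_of_complement (xb : {set 'I_n}) (s : seq 'I_n) : Prop :=
  perm_eq s (enum (~: xb)).

Definition new_cuts (xb : {set 'I_n}) (N : set (dcg_cut n R)) : Prop :=
  N = [set cutA xb] \/
  (exists s, is_ordering_of_complement xb s /\
     (N = [set cutB xb s] \/ N = [set cutA xb; cutB xb s])).

Definition master_opt (X : set {set 'I_n}) (C : set (dcg_cut n R))
  (xb : {set 'I_n}) (psib : R) : Prop :=
  X xb /\ (forall c, C c -> psib <= c xb) /\
  (forall x psi, X x -> (forall c, C c -> psi <= c x) -> psi <= psib).

(* a run of the delayed constraint generation algorithm with epsilon = 0: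
   iteration k is executed iff UB_i - LB_i > 0 for all previous i < k *)
Definition dcg_run (X : set {set 'I_n}) (C : nat -> set (dcg_cut n R))
  (xs : nat -> {set 'I_n}) (ps : nat -> R) : Prop :=
  forall k, (forall i, (i < k)%N -> ps i - CVaR P a (sigma (xs i)) > 0) ->
    master_opt X (C k) (xs k) (ps k) /\
    exists N, new_cuts (xs k) N /\ C k.+1 = C k `|` N.
End Cuts.

(* Main.v *)
Require Import Defs.
From HB Require Import structures.
From mathcomp Require Import all_boot all_order all_algebra.
From mathcomp Require Import all_classical all_reals all_analysis.
From mathcomp Require Import measurable_realfun lra.
Import Order.TTheory GRing.Theory Num.Theory.
Import numFieldNormedType.Exports.
Set Implicit Arguments. Unset Strict Implicit. Unset Printing Implicit Defensive.
Local Open Scope classical_set_scope.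
Local Open Scope ring_scope.

Section CV.
Context d (T : measurableType d) (R : realType) (P : probability T R).

Definition intg (Z : T -> R) := P.-integrable setT (EFin \o Z).
Definition EE (Z : T -> R) : R := \int[P]_w Z w.
Definition ff (a : R) (Z : T -> R) (eta : R) : R :=
  eta - a^-1 * fine (\int[P]_w (Num.max (eta - Z w) 0)%:E).

Lemma ffE a Z eta : ff a Z eta = eta - a^-1 * EE (fun w => Num.max (eta - Z w) 0).
Proof. by []. Qed.

Lemma intg_cst k : intg (fun _ => k).
Proof. exact: (finite_measure_integrable_cst P k measurableT). Qed.

Lemma intg_sub Z1 Z2 : intg Z1 -> intg Z2 -> intg (fun w => Z1 w - Z2 w).
Proof.
move=> h1 h2; have := integrableB measurableT h1 h2.
by apply: eq_integrable => // x _ /=; rewrite EFinB.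
Qed.

Lemma intg_add Z1 Z2 : intg Z1 -> intg Z2 -> intg (fun w => Z1 w + Z2 w).
Proof.
move=> h1 h2; have := integrableD measurableT h1 h2.
by apply: eq_integrable => // x _ /=; rewrite EFinD.
Qed.

Lemma intg_pos Z : intg Z -> intg (fun w => Num.max (Z w) 0).
Proof.
move=> h; have := integrable_funepos measurableT h.
by apply: eq_integrable => // x _ /=; rewrite funeposE /= EFin_max.
Qed.

Lemma EE_cst k : EE (fun _ => k) = k.
Proof. rewrite /EE Rintegral_cst //.
have h := probability_setT P.
rewrite [fine _](_ : _ = 1) ?mulr1 //; exact: (congr1 fine h). Qed.

Lemma EE_le Z1 Z2 : intg Z1 -> intg Z2 -> (forall w, Z1 w <= Z2 w) -> EE Z1 <= EE Z2.
Proof. by move=> h1 h2 h; apply: le_Rintegral. Qed.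

Lemma EE_add Z1 Z2 : intg Z1 -> intg Z2 -> EE (fun w => Z1 w + Z2 w) = EE Z1 + EE Z2.
Proof. by move=> h1 h2; apply: RintegralD. Qed.

Lemma EE_sub Z1 Z2 : intg Z1 -> intg Z2 -> EE (fun w => Z1 w - Z2 w) = EE Z1 - EE Z2.
Proof. by move=> h1 h2; apply: RintegralB. Qed.

Lemma EE_ge0 Z : (forall w, 0 <= Z w) -> 0 <= EE Z.
Proof. by move=> h; apply: Rintegral_ge0. Qed.

Lemma ff_le_EE a Z eta : 0 < a <= 1 -> intg Z -> ff a Z eta <= EE Z.
Proof.
move=> /andP[a0 a1] iZ; rewrite ffE.
have iM : intg (fun w => Num.max (eta - Z w) 0) by apply/intg_pos/intg_sub => //; exact: intg_cst.
have h1 : EE (fun w => eta - Z w) <= EE (fun w => Num.max (eta - Z w) 0).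
  by apply: EE_le => //; [apply: intg_sub => //; exact: intg_cst | move=> w; rewrite le_max lexx].
rewrite EE_sub ?EE_cst in h1 => //; last exact: intg_cst.
have h0 : 0 <= EE (fun w => Num.max (eta - Z w) 0) by apply: EE_ge0 => w; rewrite le_max lexx orbT.
have ai : 1 <= a^-1 by rewrite invr_ge1 // unitfE gt_eqF.
have : EE (fun w => Num.max (eta - Z w) 0) <= a^-1 * EE (fun w => Num.max (eta - Z w) 0).
  by rewrite ler_peMl.
lra.
Qed.
End CV.

Lemma maxcase (R : realType) (x : R) :
  (0 <= x /\ Num.max x 0 = x) \/ (x < 0 /\ Num.max x 0 = 0).
Proof.
case: (leP 0 x) => h; [left; split => //; exact/max_idPl | right; split => //; apply/max_idPr; exact: ltW].
Qed.

Section CV2.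
Context d (T : measurableType d) (R : realType) (P : probability T R).
Implicit Types (a eta : R) (Z : T -> R).

Lemma CVaR_le_EE a Z : 0 < a <= 1 -> intg P Z -> CVaR P a Z <= EE P Z.
Proof.
move=> ha iZ; apply: ge_sup; first by exists (ff P a Z 0), 0.
move=> _ [eta _ <-]; exact: ff_le_EE.
Qed.

Lemma ff_le_CVaR a Z eta : 0 < a <= 1 -> intg P Z -> ff P a Z eta <= CVaR P a Z.
Proof.
move=> ha iZ; apply: sup_upper_bound; last by exists eta.
split; first by exists (ff P a Z 0), 0.
exists (EE P Z); move=> _ [e _ <-]; exact: ff_le_EE.
Qed.

Lemma ff_mono a (Z1 Z2 : T -> R) eta : 0 < a -> intg P Z1 -> intg P Z2 ->
  (forall w, Z1 w <= Z2 w) -> ff P a Z1 eta <= ff P a Z2 eta.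
Proof.
move=> a0 i1 i2 h; rewrite !ffE lerD2l lerN2 ler_wpM2l //; first by rewrite invr_ge0 ltW.
apply: EE_le.
- by apply/intg_pos/intg_sub => //; exact: intg_cst.
- by apply/intg_pos/intg_sub => //; exact: intg_cst.
move=> w; have := h w.
case: (maxcase (eta - Z2 w)) => -[h1 ->]; case: (maxcase (eta - Z1 w)) => -[h2 ->]; lra.
Qed.

Lemma CVaR_mono a (Z1 Z2 : T -> R) : 0 < a <= 1 -> intg P Z1 -> intg P Z2 ->
  (forall w, Z1 w <= Z2 w) -> CVaR P a Z1 <= CVaR P a Z2.
Proof.
move=> ha i1 i2 h; apply: ge_sup; first by exists (ff P a Z1 0), 0.
move=> _ [eta _ <-]; apply: le_trans (ff_le_CVaR eta ha i2).
apply: ff_mono => //; by case/andP: ha.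
Qed.

Lemma CVaR1_ge Z : intg P Z -> EE P Z <= CVaR P 1 Z.
Proof.
move=> iZ; rewrite leNgt; apply/negP => hlt.
have e0 : 0 < EE P Z - CVaR P 1 Z by rewrite subr_gt0.
pose g (n : nat) w := Num.max (Z w - n%:R) 0.
have ig n : intg P (g n) by apply/intg_pos/intg_sub => //; exact: intg_cst.
have cv : (fun n => EE P (g n)) @ \oo --> 0.
  have iabs : P.-integrable setT (EFin \o (fun w => `|Z w|)).
    exact: (integrable_norm iZ).
  have conv : \forall w \ae P, [set: T] w ->
      (fun n => (g n w)%:E) @ \oo --> (cst 0%E : T -> \bar R) w.
    apply: aeW => w _; apply: cvg_near_cst.
    exists (Num.truncn `|Z w|).+1 => // n /= Nn.
    have : Z w <= n%:R.
      apply: le_trans (ler_norm _) _; apply: ltW; apply: lt_le_trans (truncnS_gt _) _.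
      by rewrite ler_nat.
    rewrite /g; case: (maxcase (Z w - n%:R)) => -[h1 ->] // h2.
    have -> : Z w - n%:R = 0 by lra.
    by [].
  have bnd : \forall w \ae P, forall n, [set: T] w ->
      (`|(g n w)%:E| <= (EFin \o (fun w => (`|Z w|)%R)) w)%E.
    apply: aeW => w n _ /=; rewrite lee_fin /g.
    case: (maxcase (Z w - n%:R)) => -[h1 ->]; last by rewrite normr0.
    rewrite ger0_norm //; apply: le_trans (ler_norm _); have : 0 <= n%:R :> R by [].
    lra.
  have := dominated_convergence (mu:=P) measurableT
    (f_ := fun n w => (g n w)%:E) (f := cst 0%E) (g := EFin \o (fun w => `|Z w|))
    (fun n => measurable_int P (ig n)) (measurable_cst _) conv iabs bnd.
  case=> _ _ h3.
  rewrite integral0 in h3; exact: (fine_cvg h3).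
move/cvgr0Pnorm_lt : cv => /(_ _ e0) [N _ HN].
have := HN N (leqnn N) => /= hN.
have key : ff P 1 Z N%:R = EE P Z - EE P (g N).
  rewrite ffE invr1 mul1r.
  have -> : EE P (fun w => Num.max (N%:R - Z w) 0) = EE P (fun w => (N%:R - Z w) + g N w).
    congr EE; apply: funext => w; rewrite /g.
    case: (maxcase (N%:R - Z w)) => -[h1 ->]; case: (maxcase (Z w - N%:R)) => -[h2 ->]; lra.
  have i1 : intg P (fun w => N%:R - Z w) by apply: intg_sub => //; exact: intg_cst.
  rewrite EE_add // EE_sub ?EE_cst //; [lra | exact: intg_cst].
have := ff_le_CVaR N%:R (a:=1) _ iZ; rewrite key lexx ltr01 => /(_ isT).
have := ler_norm (EE P (g N)); lra.
Qed.
End CV2.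

Lemma index_drop_ge (I : eqType) (s : seq I) k y :
  y \in drop k s -> uniq s -> (k <= index y s)%N.
Proof.
move=> yd us.
have ks : (k <= size s)%N.
  rewrite leqNgt; apply/negP => /ltnW h; by rewrite drop_oversize in yd.
have yt : y \notin take k s.
  apply/negP => yt; move: us; rewrite -(cat_take_drop k s) cat_uniq => /and3P[_ /hasP + _].
  by apply; exists y.
rewrite -[in index y s](cat_take_drop k s) index_cat (negbTE yt) size_takel //.
exact: leq_addr.
Qed.

Section Valid.
Context d (T : measurableType d) (R : realType) (P : probability T R) (n : nat)
  (sigma : {set 'I_n} -> T -> R) (a : R).
Hypothesis hmono : forall w (A B : {set 'I_n}), A \subset B -> sigma A w <= sigma B w.
Hypothesis hsub : forall w (A B : {set 'I_n}),
  sigma (A :|: B) w + sigma (A :&: B) w <= sigma A w + sigma B w.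
Hypothesis hint : forall x, intg P (sigma x).
Hypothesis ha : 0 < a <= 1.

Lemma sub_ind (xb : {set 'I_n}) (s : seq 'I_n) : uniq s -> (forall j, j \in s -> j \notin xb) ->
  EE P (sigma (xb :|: [set:: s])) <=
  EE P (sigma xb) + \sum_(j <- s) (EE P (sigma (j |: xb)) - EE P (sigma xb)).
Proof.
elim: s => [|j s IH] /=.
  by move=> _ _; rewrite finset.set_nil finset.setU0 big_nil addr0.
move=> /andP[js us] hs; rewrite big_cons finset.set_cons.
have IH' := IH us (fun k ks => hs k ltac:(by rewrite inE ks orbT)).
have jxb : j \notin xb by apply: hs; rewrite inE eqxx.
set A := xb :|: [set:: s]; set B := j |: xb.
have eU : xb :|: (j |: [set:: s]) = A :|: B.
  apply/setP => y; rewrite !inE.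
  by case: (y \in xb); case: (y == j); case: (y \in s).
have eI : A :&: B = xb.
  apply/setP => y; rewrite !inE.
  case: (eqVneq y j) => [->|_]; first by rewrite (negbTE js) (negbTE jxb).
  by case: (y \in xb); case: (y \in s).
have hE : EE P (sigma (A :|: B)) + EE P (sigma (A :&: B)) <=
          EE P (sigma A) + EE P (sigma B).
  rewrite -!EE_add //; apply: EE_le => //; try exact: intg_add.
rewrite eI in hE; rewrite eU; rewrite -/A in IH'; lra.
Qed.

Lemma wsum_eq (xb x : {set 'I_n}) (F : 'I_n -> R) :
  \sum_(j in ~: xb) F j * (j \in x)%:R = \sum_(j in x :\: xb) F j.
Proof.
rewrite big_mkcond [RHS]big_mkcond; apply: eq_bigr => j _; rewrite !inE.
by case: (j \in x); case: (j \in xb) => /=; rewrite ?mulr1 ?mulr0.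
Qed.

Lemma cutA_valid (xb x : {set 'I_n}) : CVaR P a (sigma x) <= cutA P sigma a xb x.
Proof.
rewrite /cutA wsum_eq.
case: (set_0Vmem (x :\: xb)) => [J0 | [j0 j0J]].
  rewrite J0 big_set0 addr0; apply: CVaR_mono => // w; apply: hmono.
  by rewrite -finset.setD_eq0 J0.
set J := x :\: xb in j0J *.
have m1 : (1 <= #|J|)%N by rewrite card_gt0; apply/set0Pn; exists j0.
have h1 : CVaR P a (sigma x) <= EE P (sigma x) by exact: (CVaR_le_EE ha (hint x)).
have h2 : EE P (sigma x) <= EE P (sigma (xb :|: J)).
  apply: EE_le => // w; apply: hmono; apply/fintype.subsetP => y yx; rewrite !inE yx.
  by case: (y \in xb).
have h3 := sub_ind (enum_uniq (mem J)) (xb := xb).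
have h3' : (forall j, j \in enum (mem J) -> j \notin xb).
  by move=> j; rewrite mem_enum !inE => /andP[].
have {h3 h3'} := h3 h3'.
rewrite set_enum big_enum /= => h3.
have h4 : \sum_(j in J) EE P (sigma (j |: xb)) <= \sum_(j in J) CVaR P 1 (sigma (j |: xb)).
  by apply: ler_sum => j _; exact: (CVaR1_ge (hint _)).
have h5 : CVaR P a (sigma xb) <= EE P (sigma xb) by exact: (CVaR_le_EE ha (hint xb)).
move: h3; rewrite !sumrB !sumr_const => h3.
move: h3; set m := #|_| => h3.
have em : #|J| = m by [].
rewrite em in m1.
rewrite -(mulr_natr (EE P (sigma xb))) in h3.
rewrite -(mulr_natr (CVaR P a (sigma xb))).
have h6 : CVaR P a (sigma xb) * (#|J|%:R - 1) <= EE P (sigma xb) * (#|J|%:R - 1).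
  apply: ler_wpM2r => //; rewrite subr_ge0 ler1n //.
move: h6; rewrite !mulrBr !mulr1 => h6.
lra.
Qed.

Lemma cutA_self (xb : {set 'I_n}) : cutA P sigma a xb xb = CVaR P a (sigma xb).
Proof.
rewrite /cutA big1 ?addr0 // => j; rewrite inE => /negbTE ->; by rewrite mulr0.
Qed.

Lemma cutB_self (xb : {set 'I_n}) s : perm_eq s (enum (~: xb)) ->
  cutB P sigma a xb s xb = CVaR P a (sigma xb).
Proof.
move=> ps; rewrite /cutB big1_seq ?addr0 // => j /= js.
by move: js; rewrite (perm_mem ps) mem_enum inE => /negbTE ->; rewrite mulr0.
Qed.

Lemma cutB_valid (xb x : {set 'I_n}) s : perm_eq s (enum (~: xb)) ->
  CVaR P a (sigma x) <= cutB P sigma a xb s x.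
Proof.
move=> ps; rewrite /cutB.
have us : uniq s by rewrite (perm_uniq ps) enum_uniq.
have ms : forall j, (j \in s) = (j \in ~: xb) by move=> j; rewrite (perm_mem ps) mem_enum.
have Dge : forall j, xb \subset ~: [set y in drop (index j s).+1 s].
  move=> j; apply/fintype.subsetP => y yxb; rewrite !inE; apply/negP => yd.
  by have := mem_drop yd; rewrite ms inE yxb.
have G0 : forall j, 0 <= CVaR P a (sigma (~: [set y in drop (index j s).+1 s])) - CVaR P a (sigma xb).
  by move=> j; rewrite subr_ge0; apply: CVaR_mono => // w; apply: hmono.
set A := finset (fun j : 'I_n => (j \in s) && (j \in x)).
case: (set_0Vmem A) => [A0 | [j0 j0A]].
  rewrite big1_seq ?addr0.
    apply: CVaR_mono => // w; apply: hmono; apply/fintype.subsetP => y yx.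
    case: (boolP (y \in xb)) => // yxb.
    have : y \in A by rewrite inE ms inE yxb yx.
    by rewrite A0 inE.
  move=> j /= js.
  have : j \notin A by rewrite A0 inE.
  by rewrite inE js /= => /negbTE ->; rewrite mulr0.
have := @arg_maxnP _ j0 (fun k => k \in A) (fun k => index k s) j0A.
case=> j jA jmax.
have /andP[js jx] : (j \in s) && (j \in x) by move: jA; rewrite inE.
pose F i := (CVaR P a (sigma (~: [set y in drop (index i s).+1 s])) - CVaR P a (sigma xb)) * (i \in x)%:R.
have e : \sum_(i <- s) F i = F j + \sum_(i <- s | i != j) F i by exact: bigD1_seq.
rewrite e {1}/F jx mulr1.
have hr : 0 <= \sum_(i <- s | i != j) F i.
  by apply: sumr_ge0 => i _; apply: mulr_ge0 => //; exact: G0.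
have hx : CVaR P a (sigma x) <= CVaR P a (sigma (~: [set y in drop (index j s).+1 s])).
  apply: CVaR_mono => // w; apply: hmono; apply/fintype.subsetP => y yx.
  rewrite !inE; apply/negP => yd.
  have ys := mem_drop yd.
  have yA : y \in A by rewrite inE ys yx.
  have h1 := jmax y yA.
  have h2 := index_drop_ge yd us.
  by have := leq_trans h2 h1; rewrite ltnn.
lra.
Qed.
End Valid.

Unset Implicit Arguments.

Theorem proposition3 (n : nat) (d : measure_display) (T : measurableType d)
  (R : realType) (P : probability T R) (sigma : {set 'I_n} -> T -> R)
  (X : set {set 'I_n}) (alpha : R)
  (C : nat -> set (dcg_cut n R)) (xs : nat -> {set 'I_n}) (ps : nat -> R) :
  (forall w (A B : {set 'I_n}), A \subset B -> sigma A w <= sigma B w) ->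
  (forall w (A B : {set 'I_n}), sigma (A :|: B) w + sigma (A :&: B) w <= sigma A w + sigma B w) ->
  (forall x, P.-integrable setT (EFin \o sigma x)) ->
  X !=set0 ->
  0 < alpha <= 1 ->
  finite_set (C 0%N) ->
  (forall c, C 0%N c -> affine_cut c /\ (forall x, X x -> CVaR P alpha (sigma x) <= c x)) ->
  dcg_run P sigma alpha X C xs ps ->
  exists k : nat,
    ps k - CVaR P alpha (sigma (xs k)) <= 0 /\
    (forall i, (i < k)%N -> ps i - CVaR P alpha (sigma (xs i)) > 0) /\
    X (xs k) /\
    (forall x, X x -> CVaR P alpha (sigma x) <= CVaR P alpha (sigma (xs k))).
Proof.
move=> hmono hsub hint hX ha hC0f hC0 hrun.
have newc_valid : forall xb N, new_cuts P sigma alpha xb N -> forall c, N c ->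
    forall x, CVaR P alpha (sigma x) <= c x.
  move=> xb N [-> c -> x | [s [hs [-> c -> x | -> c [->|->] x]]]].
  - exact: cutA_valid.
  - exact: cutB_valid.
  - exact: cutA_valid.
  - exact: cutB_valid.
have newc_self : forall xb N, new_cuts P sigma alpha xb N ->
    exists c, N c /\ c xb = CVaR P alpha (sigma xb).
  move=> xb N [-> | [s [hs [-> | ->]]]].
  - by exists (cutA P sigma alpha xb); split => //; exact: cutA_self.
  - by exists (cutB P sigma alpha xb s); split => //; exact: cutB_self.
  - by exists (cutA P sigma alpha xb); split; [left | exact: cutA_self].
have exk : exists k, ps k - CVaR P alpha (sigma (xs k)) <= 0.
  apply: contrapT => hne.
  have hpos : forall k, 0 < ps k - CVaR P alpha (sigma (xs k)).
    by move=> k; rewrite ltNge; apply/negP => h; apply: hne; exists k.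
  have run k := hrun k (fun i _ => hpos i).
  have Cmono : forall i k, (i <= k)%N -> forall c, C i c -> C k c.
    move=> i k /subnK <-; elim: (k - i)%N => [|m IH] c hc //.
    have [_ [N [_ eC]]] := run (m + i)%N.
    rewrite addSn eC; left; exact: IH.
  have inj : forall i k, (i < k)%N -> xs i <> xs k.
    move=> i k ik e.
    have [_ [N [hN eC]]] := run i.
    have [c [Nc cself]] := newc_self _ _ hN.
    have Ck : C k c by apply: (Cmono i.+1) => //; rewrite eC; right.
    have [[_ [hk _]] _] := run k.
    have := hk c Ck; rewrite -e cself => h.
    have := hpos k; rewrite -e; lra.
  pose f (i : 'I_(#|{set 'I_n}|).+1) := xs i.
  have finj : injective f.
    move=> i j e; apply/val_inj; case: (ltngtP i j) => // h.
    + by exfalso; exact: (inj _ _ h e).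
    + by exfalso; exact: (inj _ _ h (esym e)).
  by have := leq_card f finj; rewrite card_ord ltnn.
case: (ex_minnP exk) => k hk hmin.
have hprev : forall i, (i < k)%N -> 0 < ps i - CVaR P alpha (sigma (xs i)).
  move=> i ik; rewrite ltNge; apply/negP => h.
  by have := hmin i h; rewrite leqNgt ik.
have valid : forall i, (i <= k)%N -> forall c, C i c -> forall x, X x ->
    CVaR P alpha (sigma x) <= c x.
  elim => [_ c hc x hx | i IH ik c hc x hx].
    exact: ((hC0 c hc).2 x hx).
  have [_ [N [hN eC]]] := hrun i (fun j ji => hprev j (ltn_trans ji ik)).
  rewrite eC in hc; case: hc => hc.
    exact: (IH (ltnW ik) c hc x hx).
  exact: (newc_valid _ _ hN c hc x).
have [[hXk [_ hopt]] _] := hrun k hprev.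
exists k; split => //; split; first by move=> i ik; exact: hprev.
split => // x hx.
have := hopt x (CVaR P alpha (sigma x)) hx (fun c hc => valid k (leqnn k) c hc x hx).
move: hk; lra.
Qed.
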